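(* The Recursive Measure satisfies the added-YES-blocker postulate. For every SVG $\mathcal{G}=(N,\mathcal{W})$ and all $i,j\in N$ with $j$ not a dummy in $\mathcal{G}$: $$\frac{RM'^+_i(\mathcal{G})}{RM'^+_j(\mathcal{G})}=\frac{RM'^+_i(\mathcal{G}^Y)}{RM'^+_j(\mathcal{G}^Y)}.$$
   Context: A simple voting game (SVG) is a pair $\mathcal{G}=(N,\mathcal{W})$ with $N$ a nonempty finite set of players and $\mathcal{W}\subseteq 2^N$ monotone, $\emptyset\notin\mathcal{W}$, $N\in\mathcal{W}$. Divisions are identified with their YES-sets. Decisiveness and success: - Player $k$ is YES-decisive in $S$ if $k\in S\in\mathcal{W}$ and $S\setminus\{k\}\notin\mathcal{W}$. - Player $k$ is NO-decisive in $S$ if $k\notin S\notin\mathcal{W}$ and $S\cup\{k\}\in\mathcal{W}$. - A dummy is never decisive. - Player $k$ is successful in $S$ if ($k\in S\in\mathcal{W}$) or ($k\notin S\notin\mathcal{W}$). Loyal children: if $S\in\mathcal{W}$, they are the sets $S\setminus\{m\}\in\mathcal{W}$ with $m\in S$. If $S\notin\mathcal{W}$, they are the sets $S\cup\{m\}\notin\mathcal{W}$ with $m\notin S$. Recursive efficacy score $\alpha_k(S)$: - $\alpha_k(S)=1$ if $k$ is decisive; - $\alpha_k(S)=0$ if $k$ is not successful; - otherwise, the average of $\alpha_k$ over the loyal children. For a game with $m$ players, the a priori RM YES-power is $RM'^+_k=2^{-m}\sum_{S\ni k}\alpha_k(S)$. For a new player $0\notin N$, $\mathcal{G}^Y=(N\cup\{0\},\{S\cup\{0\}:S\in\mathcal{W}\})$.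 *)

(* Defs.v *)
From mathcomp Require Import all_boot all_order all_algebra.
Set Implicit Arguments. Unset Strict Implicit. Unset Printing Implicit Defensive.
Import Order.TTheory GRing.Theory Num.Theory.
Local Open Scope ring_scope.

Definition is_svg (T : finType) (W : {set {set T}}) : Prop :=
  [/\ (forall S U : {set T}, S \subset U -> S \in W -> U \in W),
      set0 \notin W & [set: T] \in W].

Section Game.
Variable T : finType.
Implicit Types (W : {set {set T}}) (S : {set T}) (k : T).

Definition yes_decisive W k S : bool :=
  [&& k \in S, S \in W & S :\ k \notin W].
Definition no_decisive W k S : bool :=
  [&& k \notin S, S \notin W & S :|: [set k] \in W].
Definition decisive W k S : bool := yes_decisive W k S || no_decisive W k S.

Definition dummy W k : Prop :=
  forall S, (S :|: [set k] \in W) = (S :\ k \in W).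

Definition successful W k S : bool :=
  ((k \in S) && (S \in W)) || ((k \notin S) && (S \notin W)).

Definition loyal_children W S : {set {set T}} :=
  if S \in W then [set S :\ m | m in S & S :\ m \in W]
  else [set S :|: [set m] | m in ~: S & S :|: [set m] \notin W].

(* Recursive efficacy score, computed with fuel; fuel #|T|.+1 is always
   sufficient in an SVG (winning chains shrink, losing chains grow). *)
Fixpoint alpha_fuel (n : nat) W k S : rat :=
  match n with
  | 0 => 0
  | n'.+1 =>
    if decisive W k S then 1
    else if ~~ successful W k S then 0
    else (\sum_(C in loyal_children W S) alpha_fuel n' W k C)
           / #|loyal_children W S|%:R
  end.

Definition alpha W k S : rat := alpha_fuel #|T|.+1 W k S.

Definition RMyes W k : rat :=
  (\sum_(S : {set T} | k \in S) alpha W k S) / (2 ^+ #|T|).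

End Game.

(* The game G^Y with a new player 0 = None added to every winning coalition. *)
Definition addYES (T : finType) (W : {set {set T}}) : {set {set option T}} :=
  [set ((Some @: S) :|: [set None]) | S : {set T} in W].

(* Main.v *)
Require Import Defs.
From mathcomp Require Import all_boot all_order all_algebra.
Set Implicit Arguments. Unset Strict Implicit. Unset Printing Implicit Defensive.
Import GRing.Theory Num.Theory.
Local Open Scope ring_scope.

Section Proofs.
Variable T : finType.
Implicit Types (W : {set {set T}}) (S : {set T}).

Definition dm W S : nat := if S \in W then #|S| else #|~: S|.

Lemma alpha_stab W k n S : (dm W S < n)%N ->
  alpha_fuel n W k S = alpha_fuel n.+1 W k S.
Proof.
elim: n S => [|n IH] S //= hd.
case: (decisive W k S) => //; case: (~~ successful W k S) => //.
congr (_ / _); apply: eq_bigr => C; rewrite /loyal_children.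
move: hd; rewrite /dm.
case: ifP => SW hd.
  case/imsetP=> m; rewrite inE => /andP[mS CW] ->; apply: IH.
  rewrite /dm CW; move: hd; rewrite (cardsD1 m S) mS; by [].
case/imsetP=> m; rewrite inE => /andP[mS CW] ->; apply: IH.
rewrite /dm (negbTE CW) setCU -setDE.
move: hd; rewrite (cardsD1 m (~: S)) mS; by [].
Qed.

Lemma alpha_more W k S : alpha_fuel #|T|.+2 W k S = alpha W k S.
Proof.
rewrite /alpha -alpha_stab //.
rewrite /dm; case: ifP => _; rewrite ltnS; exact: max_card.
Qed.

Definition fY S : {set option T} := (Some @: S) :|: [set None].
Definition gY (U : {set option T}) : {set T} := [set x | Some x \in U].

Lemma in_fY S x : (Some x \in fY S) = (x \in S).
Proof.
rewrite /fY !inE; rewrite (mem_imset _ _ (@Some_inj _)); by rewrite orbF.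
Qed.

Lemma None_fY S : None \in fY S.
Proof. by rewrite /fY !inE eqxx orbT. Qed.

Lemma gfY S : gY (fY S) = S.
Proof. by apply/setP=> x; rewrite inE in_fY. Qed.

Lemma fY_inj : injective fY.
Proof. by move=> A B e; rewrite -(gfY A) e gfY. Qed.

Lemma fgY (U : {set option T}) : None \in U -> fY (gY U) = U.
Proof.
move=> hN; apply/setP=> [[x|]]; first by rewrite in_fY inE.
by rewrite None_fY hN.
Qed.

Lemma addYES_None W U : U \in addYES W -> None \in U.
Proof. by case/imsetP=> S _ ->; exact: None_fY. Qed.

Lemma fY_in W S : (fY S \in addYES W) = (S \in W).
Proof. exact: (mem_imset _ _ fY_inj). Qed.

Lemma fYD S k : fY S :\ Some k = fY (S :\ k).
Proof.
apply/setP=> [[x|]]; rewrite in_setD1.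
  by rewrite !in_fY (inj_eq (@Some_inj _)) in_setD1.
by rewrite !None_fY.
Qed.

Lemma fYU S k : fY S :|: [set Some k] = fY (S :|: [set k]).
Proof.
apply/setP=> [[x|]]; rewrite in_setU in_set1.
  by rewrite !in_fY (inj_eq (@Some_inj _)) in_setU in_set1.
by rewrite !None_fY.
Qed.

Lemma decisive_fY W k S :
  decisive (addYES W) (Some k) (fY S) = decisive W k S.
Proof.
by rewrite /decisive /yes_decisive /no_decisive in_fY fYD fYU !fY_in.
Qed.

Lemma successful_fY W k S :
  successful (addYES W) (Some k) (fY S) = successful W k S.
Proof. by rewrite /successful in_fY fY_in. Qed.

Lemma loyal_fY W S :
  loyal_children (addYES W) (fY S) = fY @: loyal_children W S.
Proof.
rewrite /loyal_children fY_in; case: ifP => SW.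
  apply/setP=> U; apply/imsetP/imsetP.
    case=> [[m|]]; rewrite inE => /andP[mS CW] ->.
      exists (S :\ m); last by rewrite fYD.
      by apply/imsetP; exists m; rewrite // inE -in_fY mS -fY_in -fYD.
    by move: (addYES_None CW); rewrite !inE eqxx.
  case=> C /imsetP[m]; rewrite inE => /andP[mS CW] -> ->.
  by exists (Some m); rewrite ?fYD // inE in_fY mS fYD fY_in.
apply/setP=> U; apply/imsetP/imsetP.
  case=> [[m|]]; rewrite inE => /andP[mS CW] ->.
    exists (S :|: [set m]); last by rewrite fYU.
    apply/imsetP; exists m => //; rewrite inE; move: mS; rewrite inE in_fY inE => -> /=.
    by rewrite -fY_in -fYU.
  by move: mS; rewrite inE None_fY.
case=> C /imsetP[m]; rewrite inE => /andP[mS CW] -> ->.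
by exists (Some m); rewrite ?fYU // inE in_setC in_fY -in_setC mS /= fYU fY_in.
Qed.

Lemma alpha_fY W k n S :
  alpha_fuel n (addYES W) (Some k) (fY S) = alpha_fuel n W k S.
Proof.
elim: n S => [|n IH] S //=.
rewrite decisive_fY successful_fY loyal_fY.
case: (decisive W k S) => //; case: (~~ successful W k S) => //.
rewrite (card_imset _ fY_inj) big_imset /=; last by move=> ? ? _ _; apply: fY_inj.
by congr (_ / _); apply: eq_bigr => C _; apply: IH.
Qed.

Lemma alpha_noNone W k n (U : {set option T}) :
  Some k \in U -> None \notin U -> alpha_fuel n (addYES W) (Some k) U = 0.
Proof.
move=> kU NU; case: n => [|n] //=.
have UW : U \notin addYES W by apply: contra NU; apply: addYES_None.
rewrite /decisive /yes_decisive /no_decisive /successful kU (negbTE UW) /=.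
by [].
Qed.

Lemma RMyes_addYES W i : RMyes (addYES W) (Some i) = RMyes W i / 2.
Proof.
rewrite /RMyes card_option exprS.
rewrite (bigID (fun U : {set option T} => None \in U)) /=.
rewrite [X in _ + X]big1 ?addr0; last first.
  by move=> U /andP[kU NU]; apply: alpha_noNone.
rewrite (reindex_onto fY gY); last by move=> U /andP[_ hN]; apply: fgY.
rewrite [X in X / _ = _](eq_bigl (fun S => i \in S)); last first.
  by move=> S; rewrite in_fY None_fY gfY eqxx !andbT.
rewrite /alpha card_option.
under eq_bigr => S _ do rewrite alpha_fY alpha_more.
rewrite invfM mulrA [in RHS]mulrC.
by rewrite [RHS]mulrA [X in _ = X * _]mulrC.
Qed.

End Proofs.

Lemma div_cancel (x z c : rat) : c != 0 -> (x / c) / (z / c) = x / z.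
Proof. by move=> hc; rewrite invf_div mulrA divfK. Qed.

Theorem lemma3 (T : finType) (W : {set {set T}}) (i j : T) :
  is_svg W -> ~ dummy W j ->
  RMyes W i / RMyes W j = RMyes (addYES W) (Some i) / RMyes (addYES W) (Some j).
Proof.
by move=> _ _; rewrite !RMyes_addYES div_cancel.
Qed.
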